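(* Let $N,M,m\in\mathbb{N}$ with $M\geq 3$, and let $p_1,\ldots,p_m\in[1,\infty]$. Let $A$ be a nonempty subset of $\{1,\ldots,m\}$ such that $p_j=\infty$ for every $j\in A$. Then for every $m$-linear form $T:\ell_{p_1}^N\times\cdots\times\ell_{p_m}^N\to\mathbb{C}$, $$\|T\|_{A,M}\leq\|T\|\leq r_M^{-|A|}\|T\|_{A,M},$$ where $|A|$ is the cardinality of $A$.
   Context: $\ell_p^N$ denotes $\mathbb{C}^N$ with the $\ell_p$ norm (sup norm if $p=\infty$), with closed unit ball $B_{\ell_p^N}$. $\|T\|=\sup\{|T(x^{(1)},\ldots,x^{(m)})|: x^{(i)}\in B_{\ell_{p_i}^N}, 1\le i\le m\}$. $T_M=\{\exp(2j\pi i/M): j=0,\ldots,M-1\}$ is the set of $M$th roots of unity and $T_M^N=T_M\times\cdots\times T_M\subset\mathbb{C}^N$. $\|T\|_{A,M}:=\sup\{|T(x^{(1)},\ldots,x^{(m)})|: x^{(i)}\in B_{\ell_{p_i}^N}\text{ for } i\notin A,\ x^{(j)}\in T_M^N \text{ for } j\in A\}$. $r_M=\left(\frac12+\frac12\cos\left(\frac{2\pi}{M}\right)\right)^{1/2}$. *)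

(* Defs.v *)
From Stdlib Require Import Reals Lra List.
From Coquelicot Require Import Coquelicot.
Open Scope R_scope.

(* Vectors of C^N are represented as functions nat -> C (only the coordinates
   i < N are meaningful).  An m-tuple (x^(1),...,x^(m)) is a function
   x : nat -> (nat -> C) with x j = x^(j+1) (0-based indices j < m). *)

Fixpoint sumN (f : nat -> R) (n : nat) : R :=
  match n with O => 0 | S k => sumN f k + f k end.

Definition powp (a p : R) : R :=
  if Rlt_dec 0 a then Rpower a p else 0.

Definition in_ball (p : Rbar) (N : nat) (v : nat -> C) : Prop :=
  match p with
  | Finite q => sumN (fun i => powp (Cmod (v i)) q) N <= 1
  | p_infty => forall i, (i < N)%nat -> Cmod (v i) <= 1
  | m_infty => False
  end.

Definition in_TM (M : nat) (z : C) : Prop :=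
  exists j : nat, (j < M)%nat /\
    z = (cos (2 * PI * INR j / INR M), sin (2 * PI * INR j / INR M)).

Definition in_TMN (M N : nat) (v : nat -> C) : Prop :=
  forall i, (i < N)%nat -> in_TM M (v i).

Definition upd (x : nat -> nat -> C) (j : nat) (u : nat -> C) : nat -> nat -> C :=
  fun k => if Nat.eqb k j then u else x k.

Definition multilinear_form (m N : nat) (T : (nat -> nat -> C) -> C) : Prop :=
  (forall x y : nat -> nat -> C,
     (forall j i, (j < m)%nat -> (i < N)%nat -> x j i = y j i) -> T x = T y) /\
  (forall (x : nat -> nat -> C) (j : nat) (u v : nat -> C) (a b : C),
     (j < m)%nat ->
     T (upd x j (fun i => Cplus (Cmult a (u i)) (Cmult b (v i)))) =
     Cplus (Cmult a (T (upd x j u))) (Cmult b (T (upd x j v)))).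

Definition normT (m N : nat) (p : nat -> Rbar) (T : (nat -> nat -> C) -> C) : Rbar :=
  Lub_Rbar (fun r => exists x : nat -> nat -> C,
    (forall j, (j < m)%nat -> in_ball (p j) N (x j)) /\ r = Cmod (T x)).

Definition normTA (m N : nat) (p : nat -> Rbar) (A : list nat) (M : nat)
    (T : (nat -> nat -> C) -> C) : Rbar :=
  Lub_Rbar (fun r => exists x : nat -> nat -> C,
    (forall j, (j < m)%nat -> ~ In j A -> in_ball (p j) N (x j)) /\
    (forall j, In j A -> in_TMN M N (x j)) /\
    r = Cmod (T x)).

Definition r_M (M : nat) : R := sqrt (1/2 + 1/2 * cos (2 * PI / INR M)).

(* Main.v *)
Require Import Defs.
From Stdlib Require Import Reals Lra Lia List ZArith.
From Coquelicot Require Import Coquelicot.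
Open Scope R_scope.

Lemma angle (u1 u2 : R) : u1^2 + u2^2 = 1 ->
  exists phi, 0 <= phi <= 2*PI /\ cos phi = u1 /\ sin phi = u2.
Proof.
  intros H.
  assert (Hb : -1 <= u1 <= 1) by (split; nra).
  assert (Hs : sqrt (1 - u1²) = Rabs u2).
  { replace (1 - u1²) with (u2²) by (unfold Rsqr; lra). apply sqrt_Rsqr_abs. }
  pose proof (acos_bound u1). pose proof PI_RGT_0.
  destruct (Rle_or_lt 0 u2) as [Hu|Hu].
  - exists (acos u1). split; [lra|]. split; [now apply cos_acos|].
    rewrite sin_acos by auto. rewrite Hs. now apply Rabs_pos_eq.
  - exists (2*PI - acos u1). split; [lra|].
    rewrite cos_minus, sin_minus, cos_2PI, sin_2PI, cos_acos, sin_acos by auto.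
    rewrite Hs, Rabs_left by auto. split; ring.
Qed.

Lemma round (t0 : R) (M : nat) : 0 <= t0 <= INR M ->
  exists k : nat, (k <= M)%nat /\ Rabs (INR k - t0) <= 1/2.
Proof.
  intros [H0 H1].
  destruct (archimed (t0 - 1/2)) as [A1 A2].
  set (z := up (t0 - 1/2)) in *.
  assert (Hz : (0 <= z)%Z).
  { apply le_IZR. assert (IZR z > -1) by lra.
    assert (-1 < z)%Z by (apply lt_IZR; simpl; lra). apply IZR_le. lia. }
  exists (Z.to_nat z).
  assert (E : INR (Z.to_nat z) = IZR z).
  { rewrite INR_IZR_INZ, Z2Nat.id by auto. reflexivity. }
  split.
  - assert (IZR z < IZR (Z.of_nat M + 1)).
    { rewrite plus_IZR, <- INR_IZR_INZ. simpl. lra. }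
    apply lt_IZR in H. lia.
  - rewrite E. apply Rabs_le. lra.
Qed.

Lemma cos_near (M : nat) (d : R) : (3 <= M)%nat -> Rabs d <= PI / INR M ->
  cos (PI / INR M) <= cos d.
Proof.
  intros HM Hd.
  assert (HMr : 3 <= INR M) by (replace 3 with (INR 3) by (simpl; lra); now apply le_INR).
  pose proof PI_RGT_0.
  assert (0 < PI / INR M) by (apply Rdiv_lt_0_compat; lra).
  assert (PI / INR M <= PI).
  { apply Rmult_le_reg_r with (INR M); [lra|]. unfold Rdiv. rewrite Rmult_assoc, Rinv_l by lra. nra. }
  assert (cos d = cos (Rabs d)).
  { destruct (Rcase_abs d); [rewrite Rabs_left, cos_neg by auto|rewrite Rabs_right by auto]; reflexivity. }
  rewrite H2.
  destruct (Req_dec (Rabs d) (PI / INR M)) as [E|E]; [rewrite E; lra|].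
  left. apply cos_decreasing_1; try lra; pose proof (Rabs_pos d); lra.
Qed.

Lemma rM_eq (M : nat) : (3 <= M)%nat -> r_M M = cos (PI / INR M) /\ 0 < cos (PI / INR M) <= 1.
Proof.
  intros HM.
  assert (HMr : 3 <= INR M) by (replace 3 with (INR 3) by (simpl; lra); now apply le_INR).
  pose proof PI_RGT_0.
  assert (0 < PI / INR M) by (apply Rdiv_lt_0_compat; lra).
  assert (PI / INR M < PI/2).
  { apply Rmult_lt_reg_r with (2 * INR M); [lra|]. field_simplify; try lra. nra. }
  assert (Hc : 0 < cos (PI / INR M)) by (apply cos_gt_0; lra).
  split; [|split; [auto| apply COS_bound]].
  unfold r_M. replace (2 * PI / INR M) with (2 * (PI / INR M)) by (field; lra).
  rewrite cos_2a_cos.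
  replace (1 / 2 + 1 / 2 * (2 * cos (PI / INR M) * cos (PI / INR M) - 1)) with (cos (PI / INR M))²
    by (unfold Rsqr; field).
  apply sqrt_Rsqr. lra.
Qed.
Lemma geo (M : nat) (v : C) : (3 <= M)%nat ->
  exists k, (k < M)%nat /\
   cos (PI / INR M) * Cmod v <= fst v * cos (2 * PI * INR k / INR M) - snd v * sin (2 * PI * INR k / INR M).
Proof.
  intros HM.
  assert (HMr : 3 <= INR M) by (replace 3 with (INR 3) by (simpl; lra); now apply le_INR).
  pose proof PI_RGT_0.
  assert (Hwrap : forall k0, (k0 <= M)%nat -> exists k, (k < M)%nat /\
     cos (2 * PI * INR k / INR M) = cos (2 * PI * INR k0 / INR M) /\
     sin (2 * PI * INR k / INR M) = sin (2 * PI * INR k0 / INR M)).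
  { intros k0 Hk0. destruct (Nat.eq_dec k0 M) as [->|Hne].
    - exists 0%nat. split; [lia|]. replace (2 * PI * INR M / INR M) with (2*PI) by (field; lra).
      simpl. replace (2 * PI * 0 / INR M) with 0 by (field; lra).
      rewrite cos_0, sin_0, cos_2PI, sin_2PI. auto.
    - exists k0. split; [lia|auto]. }
  destruct v as [v1 v2]. simpl.
  set (s := Cmod (v1, v2)).
  assert (Hs2 : s * s = v1^2 + v2^2).
  { unfold s, Cmod. simpl. apply sqrt_sqrt. nra. }
  assert (Hs0 : 0 <= s) by apply Cmod_ge_0.
  destruct (Req_dec s 0) as [E|E].
  - exists 0%nat. split; [lia|]. rewrite E.
    assert (v1 = 0 /\ v2 = 0) as [-> ->] by (split; nra). lra.
  - destruct (angle (v1 / s) (- v2 / s)) as [phi [Hphi [Hc Hsn]]].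
    { field_simplify; [|auto]. rewrite <- Hs2. field. auto. }
    destruct (round (phi * INR M / (2 * PI)) M) as [k0 [Hk0 Hr]].
    { split. apply Rmult_le_pos; [|left; apply Rinv_0_lt_compat; lra]. nra.
      apply Rmult_le_reg_r with (2 * PI); [lra|]. field_simplify; try lra. nra. }
    destruct (Hwrap k0 Hk0) as [k [Hk [Ec Es]]].
    exists k. split; auto. rewrite Ec, Es.
    set (t := 2 * PI * INR k0 / INR M).
    assert (Hd : Rabs (phi - t) <= PI / INR M).
    { replace (phi - t) with ((2 * PI / INR M) * (phi * INR M / (2 * PI) - INR k0)) by (unfold t; field; lra).
      rewrite Rabs_mult, Rabs_right by (apply Rle_ge, Rlt_le, Rdiv_lt_0_compat; lra).
      rewrite Rabs_minus_sym.
      apply Rle_trans with (2 * PI / INR M * (1/2)).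
      apply Rmult_le_compat_l; [apply Rlt_le, Rdiv_lt_0_compat; lra| auto].
      right. field. lra. }
    pose proof (cos_near M (phi - t) HM Hd).
    rewrite cos_minus, Hc, Hsn in H0.
    replace (v1 * cos t - v2 * sin t) with (s * (v1 / s * cos t + - v2 / s * sin t)) by (field; auto).
    rewrite (Rmult_comm (cos _)). apply Rmult_le_compat_l; lra.
Qed.

Lemma affine_max (M : nat) (a b z : C) : (3 <= M)%nat -> Cmod z <= cos (PI / INR M) ->
  exists k, (k < M)%nat /\
   Cmod (a + b * z)%C <= Cmod (a + b * (cos (2 * PI * INR k / INR M), sin (2 * PI * INR k / INR M)))%C.
Proof.
  intros HM Hz.
  destruct (rM_eq M HM) as [_ [Hr0 Hr1]].
  set (r := cos (PI / INR M)) in *.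
  destruct (geo M (Cconj a * b)%C HM) as [k [Hk Hg]].
  exists k. split; auto.
  set (c := cos (2 * PI * INR k / INR M)) in *.
  set (sn := sin (2 * PI * INR k / INR M)) in *.
  assert (Hcs : c^2 + sn^2 = 1) by (unfold c, sn; rewrite <- (sin2_cos2 (2 * PI * INR k / INR M)); unfold Rsqr; ring).
  rewrite Cmod_mult, Cmod_conj in Hg.
  apply Rle_trans with (Cmod a + r * Cmod b).
  { eapply Rle_trans; [apply Cmod_triangle|]. rewrite Cmod_mult.
    apply Rplus_le_compat_l. rewrite (Rmult_comm r). apply Rmult_le_compat_l; auto. apply Cmod_ge_0. }
  fold r in Hg.
  pose proof (Cmod_ge_0 a). pose proof (Cmod_ge_0 b).
  assert (Ha2 : Cmod a ^ 2 = fst a ^2 + snd a ^2) by (unfold Cmod; rewrite pow2_sqrt; nra).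
  assert (Hb2 : Cmod b ^ 2 = fst b ^2 + snd b ^2) by (unfold Cmod; rewrite pow2_sqrt; nra).
  set (w := (a + b * (c, sn))%C).
  assert (Hw2 : Cmod w ^ 2 = fst w ^2 + snd w ^2) by (unfold Cmod; rewrite pow2_sqrt; nra).
  assert (Hw : fst w ^2 + snd w ^2 = Cmod a ^2 + Cmod b ^2 + 2 * (fst (Cconj a * b)%C * c - snd (Cconj a * b)%C * sn)).
  { rewrite Ha2, Hb2. destruct a as [a1 a2], b as [b1 b2]. unfold w. simpl. idtac.
    assert (E: c*c + sn*sn = 1) by nra.
    replace (b1*(b1*1)+b2*(b2*1)) with ((b1*b1+b2*b2)*(c*c+sn*sn)) by (rewrite E; ring). ring. }
  pose proof (Cmod_ge_0 w).
  assert (HX : (Cmod a + r * Cmod b)^2 <= Cmod w ^2).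
  { rewrite Hw2, Hw. assert (r * r <= 1) by nra. nra. }
  nra.
Qed.

Ltac Csolve := repeat match goal with z : C |- _ => destruct z end;
  unfold Cplus, Cmult, RtoC; apply injective_projections; simpl; ring.

Lemma coord_affine (m N : nat) (T : (nat -> nat -> C) -> C) (y : nat -> nat -> C) (j0 i0 : nat) (z : C) :
  multilinear_form m N T -> (j0 < m)%nat ->
  T (upd y j0 (fun i => if Nat.eqb i i0 then z else y j0 i)) =
  (T (upd y j0 (fun i => if Nat.eqb i i0 then 0%C else y j0 i))
   + T (upd y j0 (fun i => if Nat.eqb i i0 then 1%C else 0%C)) * z)%C.
Proof.
  intros [Hext Hlin] Hj. rewrite (Cmult_comm _ z).
  rewrite <- (Cmult_1_l (T (upd y j0 (fun i => if Nat.eqb i i0 then 0%C else y j0 i)))).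
  rewrite <- Hlin by auto.
  apply Hext. intros j i _ _. unfold upd.
  destruct (Nat.eqb j j0); [|reflexivity].
  destruct (Nat.eqb i i0); Csolve.
Qed.

Definition goodA (m N M : nat) (p : nat -> Rbar) (A : list nat) (y : nat -> nat -> C) : Prop :=
  (forall j, (j < m)%nat -> ~ In j A -> in_ball (p j) N (y j)) /\
  (forall j i, In j A -> (i < N)%nat -> in_TM M (y j i) \/ Cmod (y j i) <= cos (PI / INR M)).

Lemma core (m N M : nat) (p : nat -> Rbar) (A : list nat) (T : (nat -> nat -> C) -> C) (l : R) :
  (3 <= M)%nat -> multilinear_form m N T -> (forall j, In j A -> (j < m)%nat) ->
  (forall y, (forall j, (j < m)%nat -> ~ In j A -> in_ball (p j) N (y j)) ->
             (forall j, In j A -> in_TMN M N (y j)) -> Cmod (T y) <= l) ->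
  forall L y, goodA m N M p A y ->
    (forall j i, In j A -> (i < N)%nat -> ~ In (j, i) L -> in_TM M (y j i)) ->
    Cmod (T y) <= l.
Proof.
  intros HM HT HA Hl L. induction L as [|[j0 i0] L IH]; intros y [G1 G2] HL.
  - apply Hl; auto. intros j Hj i Hi. apply HL; auto.
  - destruct (Classical_Prop.classic (In j0 A /\ (i0 < N)%nat /\ ~ in_TM M (y j0 i0))) as [[Hj0 [Hi0 Hn]]|Hno].
    + destruct (G2 j0 i0 Hj0 Hi0) as [Ht|Hc]; [contradiction|].
      set (ys := fun z => upd y j0 (fun i => if Nat.eqb i i0 then z else y j0 i)).
      assert (Ey : T y = T (ys (y j0 i0))).
      { destruct HT as [Hext _]. apply Hext. intros j i _ _. unfold ys, upd.
        destruct (Nat.eqb j j0) eqn:E1; [|reflexivity]. apply Nat.eqb_eq in E1. subst.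
        destruct (Nat.eqb i i0) eqn:E2; [apply Nat.eqb_eq in E2; subst|]; reflexivity. }
      destruct (affine_max M (T (upd y j0 (fun i => if Nat.eqb i i0 then 0%C else y j0 i)))
         (T (upd y j0 (fun i => if Nat.eqb i i0 then 1%C else 0%C))) (y j0 i0) HM Hc) as [k [Hk Hle]].
      set (w := (cos (2 * PI * INR k / INR M), sin (2 * PI * INR k / INR M))) in *.
      assert (Hw : in_TM M w) by (exists k; split; auto).
      rewrite Ey. unfold ys. rewrite coord_affine with (m := m) (N := N) by auto.
      eapply Rle_trans; [apply Hle|].
      rewrite <- coord_affine with (m := m) (N := N) by auto.
      apply IH.
      * split.
        -- intros j Hj Hnj. unfold upd. destruct (Nat.eqb j j0) eqn:E1.
           ++ apply Nat.eqb_eq in E1. subst. contradiction.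
           ++ auto.
        -- intros j i Hj Hi. unfold upd. destruct (Nat.eqb j j0) eqn:E1.
           ++ apply Nat.eqb_eq in E1. subst.
              destruct (Nat.eqb i i0); [left; exact Hw|apply G2; auto].
           ++ apply G2; auto.
      * intros j i Hj Hi HnL. unfold upd. destruct (Nat.eqb j j0) eqn:E1.
        -- apply Nat.eqb_eq in E1. subst. destruct (Nat.eqb i i0) eqn:E2; auto.
           apply HL; auto. intros [E|E]; [inversion E; subst; rewrite Nat.eqb_refl in E2; discriminate|auto].
        -- apply HL; auto. intros [E|E]; [inversion E; subst; rewrite Nat.eqb_refl in E1; discriminate|auto].
    + apply IH; [split; auto|].
      intros j i Hj Hi HnL.
      destruct (Classical_Prop.classic ((j, i) = (j0, i0))) as [E|E].
      * inversion E; subst. apply Classical_Prop.NNPP. intros Hn. apply Hno; auto.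
      * apply HL; auto. intros [E'|E']; [congruence|auto].
Qed.

Definition sc (r : R) (L : list nat) (x : nat -> nat -> C) : nat -> nat -> C :=
  fun j => if in_dec Nat.eq_dec j L then (fun i => (RtoC r * x j i)%C) else x j.

Lemma sc_mod (m N : nat) (T : (nat -> nat -> C) -> C) (r : R) (x : nat -> nat -> C) :
  multilinear_form m N T -> 0 <= r -> forall L, NoDup L -> (forall j, In j L -> (j < m)%nat) ->
  Cmod (T (sc r L x)) = r ^ length L * Cmod (T x).
Proof.
  intros HT Hr L. induction L as [|a L IH]; intros HN HL.
  - simpl. rewrite Rmult_1_l. reflexivity.
  - inversion HN; subst.
    assert (E : T (sc r (a :: L) x) =
       (RtoC r * T (upd (sc r L x) a (sc r L x a)) + RtoC 0 * T (upd (sc r L x) a (sc r L x a)))%C).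
    { destruct HT as [Hext Hlin]. rewrite <- Hlin by (apply HL; left; auto).
      apply Hext. intros j i _ _. unfold upd, sc.
      destruct (Nat.eqb j a) eqn:E1.
      - apply Nat.eqb_eq in E1. subst.
        destruct (in_dec Nat.eq_dec a (a :: L)) as [_|n]; [|exfalso; apply n; left; auto].
        destruct (in_dec Nat.eq_dec a L); [contradiction|]. Csolve.
      - destruct (in_dec Nat.eq_dec j (a :: L)) as [[E|E]|E].
        + subst. rewrite Nat.eqb_refl in E1. discriminate.
        + destruct (in_dec Nat.eq_dec j L); [reflexivity|contradiction].
        + destruct (in_dec Nat.eq_dec j L); [exfalso; apply E; right; auto|reflexivity]. }
    assert (E2 : T (upd (sc r L x) a (sc r L x a)) = T (sc r L x)).
    { destruct HT as [Hext _]. apply Hext. intros j i _ _. unfold upd.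
      destruct (Nat.eqb j a) eqn:E1; [apply Nat.eqb_eq in E1; subst|]; reflexivity. }
    rewrite E, E2.
    replace (RtoC r * T (sc r L x) + RtoC 0 * T (sc r L x))%C with (RtoC r * T (sc r L x))%C by Csolve.
    rewrite Cmod_mult, Cmod_R, Rabs_pos_eq, IH by (auto; intros; apply HL; right; auto).
    simpl. ring.
Qed.

Lemma sumN_zero (f : nat -> R) n : (forall i, f i = 0) -> sumN f n = 0.
Proof. intros H. induction n; simpl; [auto|rewrite IHn, H; ring]. Qed.

Theorem mainTheorem3 (N M m : nat) (p : nat -> Rbar) (A : list nat)
  (T : (nat -> nat -> C) -> C) :
  (3 <= M)%nat ->
  (forall j, (j < m)%nat -> Rbar_le (Finite 1) (p j)) ->
  A <> nil -> NoDup A -> (forall j, In j A -> (j < m)%nat) ->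
  (forall j, In j A -> p j = p_infty) ->
  multilinear_form m N T ->
  Rbar_le (normTA m N p A M T) (normT m N p T) /\
  Rbar_le (normT m N p T)
          (Rbar_mult (Finite (/ (r_M M) ^ length A)) (normTA m N p A M T)).
Proof.
  intros HM Hp HAn HND HA HAi HT.
  assert (HMr : 3 <= INR M) by (replace 3 with (INR 3) by (simpl; lra); now apply le_INR).
  destruct (rM_eq M HM) as [Er [Hr0 Hr1]].
  assert (TM1 : forall z, in_TM M z -> Cmod z = 1).
  { intros z [k [_ ->]]. unfold Cmod. cbn [fst snd]. rewrite <- sqrt_1. f_equal.
    pose proof (sin2_cos2 (2 * PI * INR k / INR M)). unfold Rsqr in H. lra. }
  unfold normTA, normT.
  set (EA := fun r => exists x : nat -> nat -> C,
    (forall j, (j < m)%nat -> ~ In j A -> in_ball (p j) N (x j)) /\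
    (forall j, In j A -> in_TMN M N (x j)) /\ r = Cmod (T x)).
  set (E := fun r => exists x : nat -> nat -> C,
    (forall j, (j < m)%nat -> in_ball (p j) N (x j)) /\ r = Cmod (T x)).
  destruct (Lub_Rbar_correct EA) as [ubA lubA].
  destruct (Lub_Rbar_correct E) as [ub lub].
  split.
  - apply lubA. intros r [x [H1 [H2 ->]]]. apply ub. exists x. split; auto.
    intros j Hj. destruct (in_dec Nat.eq_dec j A) as [Hi|Hi]; auto.
    rewrite HAi by auto. simpl. intros i Hi'. rewrite TM1; [lra|]. apply H2; auto.
  -
    set (y0 := fun j (i : nat) => if in_dec Nat.eq_dec j A then 1%C else 0%C).
    assert (Hy0 : EA (Cmod (T y0))).
    { exists y0. split; [|split; auto].
      - intros j Hj Hn. unfold y0. destruct (in_dec Nat.eq_dec j A); [contradiction|].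
        specialize (Hp j Hj). destruct (p j) as [q| |]; simpl in *; try tauto.
        + rewrite sumN_zero; [lra|]. intros i. unfold powp. rewrite Cmod_0.
          destruct (Rlt_dec 0 0); [lra|auto].
        + intros. rewrite Cmod_0. lra.
      - intros j Hj i Hi. unfold y0. destruct (in_dec Nat.eq_dec j A); [|contradiction].
        exists 0%nat. split; [lia|]. simpl. replace (2 * PI * 0 / INR M) with 0 by (field; lra).
        rewrite cos_0, sin_0. reflexivity. }
    assert (Hc : 0 < / r_M M ^ length A).
    { apply Rinv_0_lt_compat, pow_lt. rewrite Er. auto. }
    destruct (Lub_Rbar EA) as [l| |] eqn:EL.
    + simpl. apply lub. intros r [x [Hx ->]]. simpl.
      set (y := sc (r_M M) A x).
      assert (Hy : Cmod (T y) <= l).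
      { apply (core m N M p A T l HM HT HA) with (L := list_prod A (seq 0 N)).
        - intros y' H1 H2. apply (ubA (Cmod (T y'))). exists y'. auto.
        - split.
          + intros j Hj Hn. unfold y, sc. destruct (in_dec Nat.eq_dec j A); [contradiction|auto].
          + intros j i Hj Hi. right. unfold y, sc. destruct (in_dec Nat.eq_dec j A); [|contradiction].
            rewrite Cmod_mult, Cmod_R, Rabs_pos_eq, <- Er by lra.
            rewrite <- (Rmult_1_r (r_M M)) at 2. apply Rmult_le_compat_l; [lra|].
            pose proof (Hx j (HA j Hj)) as Hb. rewrite HAi in Hb by auto. apply Hb; auto.
        - intros j i Hj Hi Hn. exfalso. apply Hn. apply in_prod; auto. apply in_seq. lia. }
      unfold y in Hy. rewrite (sc_mod m N T (r_M M) x HT) in Hy by (auto; lra).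
      assert (Hpos : 0 < r_M M ^ length A) by (apply pow_lt; lra).
      apply Rmult_le_reg_l with (r_M M ^ length A); auto.
      rewrite <- Rmult_assoc, Rinv_r, Rmult_1_l by lra. auto.
    + simpl. destruct (Rle_dec 0 (/ r_M M ^ length A)) as [r0|r0]; [|lra].
      destruct (Rle_lt_or_eq_dec 0 (/ r_M M ^ length A) r0); [|lra].
      destruct (Lub_Rbar E); simpl; auto.
    + exfalso. specialize (ubA _ Hy0). simpl in ubA. auto.
Qed.
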